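(* Let $\epsilon_1>0$, let $u$ be a utility function on contexts of sensitivity $\Delta u\le1$ (context population size or overlap with a fixed starting context, $-\infty$ on non-matching contexts), and let $C_V$ be a starting context with $f_M(D_{C_V},V)=\mathrm{true}$. Consider the Random Walk Sampling algorithm: initialize the multiset $C_M=[C_V]$ and current context $C=C_V$; repeatedly pick uniformly at random a context $C_i$ connected to $C$ (among those not yet rejected); if $f_M(D_{C_i},V)=\mathrm{true}$, append $C_i$ to $C_M$ and set $C\leftarrow C_i$, otherwise discard $C_i$; stop when $|C_M|>n$ or no candidate connected context remains; finally output $\mathrm{Exp}^{\epsilon_1}_u(D,C_M)$. Then this algorithm satisfies $(2\epsilon_1,\ COE_M(\cdot,V))$-Output Constrained Differential Privacy.
   Context: Dataset $D$ over categorical attributes $A_1,\dots,A_m$ (domain sizes $|A_i|$, all possible values) and metric attribute $M$; $t=\sum_i|A_i|$. A context is a binary vector of length $t$, $c_{ij}=1$ meaning the $j$-th value of $A_i$ is selected; $D_C$ is the set of tuples of $D$ whose value in every $A_i$ is selected by $C$. Two contexts are connected if their Hamming distance is $1$. $f_M(D_C,V)$ is a deterministic test of whether record $V$ is an outlier in $D_C$ w.r.t. $M$; $COE_M(D,V)$ is the set of contexts $C$ with $V\in D_C$ and $f_M(D_C,V)=\mathrm{true}$. Sensitivity $\Delta u=\max|u(D_1,r)-u(D_2,r)|$ over neighboring datasets (differing by adding/removing one record) and outputs $r$. $\mathrm{Exp}^{\epsilon}_u(D,\mathcal R)$ outputs $r\in\mathcal R$ with probability $\exp(\epsilon u(D,r)/(2\Delta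 u))/\sum_{r'\in\mathcal R}\exp(\epsilon u(D,r')/(2\Delta u))$. $D_1,D_2$ are $f$-neighbors if they differ by adding/removing one record and $f(D_1)=f(D_2)\ne\emptyset$; $\mathcal M$ satisfies $(\epsilon,f)$-Output Constrained Differential Privacy if $\Pr[\mathcal M(D_1)\in S]\le e^\epsilon\Pr[\mathcal M(D_2)\in S]$ for all $f$-neighbors and all output sets $S$. *)

(* Defs.v *)
From HB Require Import structures.
From mathcomp Require Import all_boot all_order all_algebra.
From mathcomp Require Import reals constructive_ereal ereal sequences exp.

Set Implicit Arguments.
Unset Strict Implicit.
Unset Printing Implicit Defensive.

Import Order.TTheory GRing.Theory Num.Theory.

Section Data.
Variables (m : nat) (dom : 'I_m -> nat) (Mt : eqType).

(* a record: one value for each categorical attribute A_i (|A_i| = dom i), plus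
   the value of the metric attribute M (of type Mt) *)
Definition record : eqType := ({dffun forall i : 'I_m, 'I_(dom i)} * Mt)%type.

(* the t = sum_i |A_i| positions of a context: pairs (i, j), j-th value of A_i *)
Definition attrval : finType := {i : 'I_m & 'I_(dom i)}.

Definition context : finType := {ffun attrval -> bool}.

Definition selects (C : context) (x : record) : bool :=
  [forall i : 'I_m, C (Tagged (fun i => 'I_(dom i)) (x.1 i))].

(* D_C (datasets are multisets of records, represented as sequences) *)
Definition restrict (D : seq record) (C : context) : seq record :=
  [seq x <- D | selects C x].

Definition connected (C1 C2 : context) : bool :=
  #|[pred k | C1 k != C2 k]| == 1%N.

Definition neighbors (D1 D2 : seq record) : Prop :=
  exists r : record, perm_eq D2 (r :: D1) \/ perm_eq D1 (r :: D2).

Definition in_coe (f : seq record -> record -> bool) (D : seq record)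
  (V : record) (C : context) : bool :=
  (V \in restrict D C) && f (restrict D C) V.

Definition COE (f : seq record -> record -> bool) (D : seq record) (V : record)
  : {set context} := [set C | in_coe f D V C].

Definition f_neighbors (F : seq record -> {set context}) (D1 D2 : seq record)
  : Prop := neighbors D1 D2 /\ F D1 = F D2 /\ F D1 != set0.

End Data.

Section Mech.
Variables (m : nat) (dom : 'I_m -> nat) (Mt : eqType) (R : realType).
Local Open Scope ring_scope.

(* a finitely supported distribution: list of (probability, outcome) *)
Fixpoint rws_walk (acc : pred (context dom)) (n : nat) (fuel : nat)
  (C : context dom) (CM : seq (context dom)) (Rej : seq (context dom))
  : seq (R * seq (context dom)) :=
  match fuel with
  | 0 => [:: (1, CM)]
  | fuel'.+1 =>
    if (n < size CM)%N then [:: (1, CM)] else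
    let cand := [seq C' <- enum (context dom) | connected C C' && (C' \notin Rej)] in
    if cand is [::] then [:: (1, CM)] else
    flatten [seq [seq ((size cand)%:R^-1 * pq.1, pq.2)
                 | pq <- if acc C'
                         then rws_walk acc n fuel' C' (rcons CM C') Rej
                         else rws_walk acc n fuel' C CM (C' :: Rej)]
            | C' <- cand]
  end.

(* distribution of the multiset C_M produced by Random Walk Sampling started at CV;
   the fuel n + #|context| + 1 is never exhausted (each step either appends to C_M,
   at most n times, or rejects a new context) *)
Definition rws_dist (acc : pred (context dom)) (n : nat) (CV : context dom)
  : seq (R * seq (context dom)) :=
  rws_walk acc n (n + #|context dom|).+1 CV [:: CV] [::].

Definition weight (eps Delta : R) (uD : context dom -> \bar R) (C : context dom) : R :=
  if uD C is r%:E then expR (eps * r / (2 * Delta)) else 0.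

Definition expmech (w : context dom -> R) (CM : seq (context dom)) (r : context dom) : R :=
  (\sum_(x <- CM | x == r) w x) / (\sum_(x <- CM) w x).

Definition RWS (f : seq (record dom Mt) -> record dom Mt -> bool)
  (u : seq (record dom Mt) -> context dom -> \bar R) (V : record dom Mt)
  (CV : context dom) (n : nat) (eps1 Delta : R) (D : seq (record dom Mt))
  : context dom -> R :=
  fun r => \sum_(pq <- rws_dist (in_coe f D V) n CV)
             pq.1 * expmech (weight eps1 Delta (u D)) pq.2 r.

Definition Pr (P : context dom -> R) (S : {set context dom}) : R := \sum_(r in S) P r.

(* Delta is the sensitivity of u (the least upper bound of |u(D1,r) - u(D2,r)|) *)
Definition is_sensitivity (u : seq (record dom Mt) -> context dom -> \bar R) (Delta : R)
  : Prop :=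
  (forall D1 D2, neighbors D1 D2 -> forall C, (u D1 C <= u D2 C + Delta%:E)%E) /\
  (forall delta : R, delta < Delta ->
     exists D1 D2 C, neighbors D1 D2 /\ (u D2 C + delta%:E < u D1 C)%E).

Definition OCDP_on (P : seq (record dom Mt) -> Prop) (eps : R)
  (F : seq (record dom Mt) -> {set context dom})
  (M : seq (record dom Mt) -> context dom -> R) : Prop :=
  forall D1 D2, P D1 -> P D2 -> f_neighbors F D1 D2 ->
    forall S : {set context dom}, Pr (M D1) S <= expR eps * Pr (M D2) S.

End Mech.

(* Main.v *)
Require Import Defs.
From HB Require Import structures.
From mathcomp Require Import all_boot all_order all_algebra.
From mathcomp Require Import reals constructive_ereal ereal sequences exp.
From mathcomp Require Import ring lra.
Set Implicit Arguments.
Unset Strict Implicit.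
Unset Printing Implicit Defensive.
Import Order.TTheory GRing.Theory Num.Theory.
Local Open Scope ring_scope.

Definition wt (R : realType) (eps Delta : R) (x : \bar R) : R :=
  if x is r%:E then expR (eps * r / (2 * Delta)) else 0.

Lemma wt_ge0 (R : realType) (eps Delta : R) x : 0 <= wt eps Delta x.
Proof. by case: x => [r| |] //=; exact: expR_ge0. Qed.

Lemma wt_le (R : realType) (eps Delta : R) (x y : \bar R) :
  0 < Delta -> 0 <= eps -> x != +oo%E -> y != +oo%E ->
  (x <= y + Delta%:E)%E -> wt eps Delta x <= expR (eps / 2) * wt eps Delta y.
Proof.
move=> D0 e0; case: x => [r1| |] //= _; last first.
  by move=> _ _; rewrite mulr_ge0 ?expR_ge0 ?wt_ge0.
case: y => [r2| |] //= _.
rewrite -EFinD lee_fin => h.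
rewrite -expRD ler_expR.
have e2 : eps / 2 = eps / (2 * Delta) * Delta.
  by rewrite invfM mulrA -mulrA mulVf ?mulr1 // gt_eqF.
rewrite e2 [eps * r1 / _]mulrAC [eps * r2 / _]mulrAC -mulrDr.
apply: ler_wpM2l; first by rewrite divr_ge0 // mulr_ge0 // ltW.
by rewrite addrC.
Qed.

Section S.
Variables (m : nat) (dom : 'I_m -> nat) (R : realType).

Lemma rws_walk_ext (a1 a2 : pred (context dom)) n fuel C CM Rej :
  a1 =1 a2 -> rws_walk R a1 n fuel C CM Rej = rws_walk R a2 n fuel C CM Rej.
Proof.
move=> e; elim: fuel C CM Rej => [|fu IH] C CM Rej //=.
case: ifP => // _.
case: [seq C' <- _ | _] => // c l.
by congr flatten; apply: eq_map => C'; rewrite e !IH.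
Qed.

Lemma rws_walk_ge0 (a : pred (context dom)) n fuel C CM Rej pq :
  pq \in rws_walk R a n fuel C CM Rej -> 0 <= pq.1.
Proof.
elim: fuel C CM Rej pq => [|fu IH] C CM Rej pq /=.
  by rewrite inE => /eqP -> /=.
case: ifP => _; first by rewrite inE => /eqP -> /=.
case E: [seq C' <- _ | _] => [|c l]; first by rewrite inE => /eqP -> /=.
move/flattenP => [s /mapP [C' _ ->]] /mapP [pq' Hpq' ->] /=.
rewrite mulr_ge0 // ?invr_ge0 ?ler0n //.
by move: Hpq'; case: ifP => _ /IH.
Qed.
End S.

Theorem theorem6 (m : nat) (dom : 'I_m -> nat) (Mt : eqType) (R : realType)
  (f : seq (record dom Mt) -> record dom Mt -> bool)
  (u : seq (record dom Mt) -> context dom -> \bar R)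
  (V : record dom Mt) (CV : context dom) (n : nat) (eps1 Delta : R) :
  0 < eps1 ->
  (forall D C, u D C != +oo%E) ->
  0 < Delta -> Delta <= 1 -> is_sensitivity u Delta ->
  OCDP_on (fun D => in_coe f D V CV) (2 * eps1) (fun D => COE f D V)
    (RWS f u V CV n eps1 Delta).
Proof.
move=> e0 noinf D0 D1le [sens _] D1 D2 _ _ [nb [eqF _]] S.
have nb' : neighbors D2 D1 by case: nb => r [h|h]; exists r; [right|left].
have acc : in_coe f D1 V =1 in_coe f D2 V.
  by move=> C; have := congr1 (fun A : {set _} => C \in A) eqF; rewrite /COE !inE.
set a := expR (eps1 / 2).
have a0 : 0 < a by apply: expR_gt0.
have w12 : forall C, weight eps1 Delta (u D1) C <= a * weight eps1 Delta (u D2) C.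
  move=> C; rewrite /weight; have := wt_le D0 (ltW e0) (noinf D1 C) (noinf D2 C)
    (sens _ _ nb C); by rewrite /wt.
have w21 : forall C, weight eps1 Delta (u D2) C <= a * weight eps1 Delta (u D1) C.
  move=> C; rewrite /weight; have := wt_le D0 (ltW e0) (noinf D2 C) (noinf D1 C)
    (sens _ _ nb' C); by rewrite /wt.
have wge0 : forall D C, 0 <= weight eps1 Delta (u D) C.
  by move=> D C; rewrite /weight; case: (u D C) => [r| |] //; apply: expR_ge0.
have em : forall CM r, expmech (weight eps1 Delta (u D1)) CM r <=
    expR (2 * eps1) * expmech (weight eps1 Delta (u D2)) CM r.
  move=> CM r; rewrite /expmech.
  set n1 := \sum_(x <- CM | x == r) _; set n2 := \sum_(x <- CM | x == r) _.
  set d1 := \sum_(x <- CM) _; set d2 := \sum_(x <- CM) _.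
  have n2ge0 : 0 <= n2 by apply: sumr_ge0.
  have d2ge0 : 0 <= d2 by apply: sumr_ge0.
  have n1ge0 : 0 <= n1 by apply: sumr_ge0.
  have d1ge0 : 0 <= d1 by apply: sumr_ge0.
  have hn : n1 <= a * n2 by rewrite /n1 /n2 mulr_sumr; apply: ler_sum.
  have hd : d2 <= a * d1 by rewrite /d1 /d2 mulr_sumr; apply: ler_sum.
  have rhs0 : 0 <= expR (2 * eps1) * (n2 / d2).
    by rewrite mulr_ge0 ?expR_ge0 ?divr_ge0.
  have [d10|d1p] := eqVneq d1 0; first by rewrite d10 invr0 mulr0.
  have d1pos : 0 < d1 by rewrite lt_def d1p.
  have hd' : d1 <= a * d2.
    by rewrite /d1 /d2 mulr_sumr; apply: ler_sum.
  have d2pos : 0 < d2.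
    rewrite lt_def d2ge0 andbT; apply/eqP => h; move: hd'; rewrite h mulr0.
    by rewrite leNgt d1pos.
  have aa : a * a <= expR (2 * eps1).
    by rewrite /a -expRD ler_expR; lra.
  apply: (le_trans (y := a * a * (n2 / d2))); last first.
    by apply: ler_wpM2r => //; rewrite divr_ge0.
  have hi : d1^-1 <= a / d2.
    by rewrite ler_pdivlMr // mulrC ler_pdivrMr.
  have -> : a * a * (n2 / d2) = (a * n2) * (a / d2) by rewrite !mulrA; congr (_ * _); rewrite mulrAC.
  apply: (le_trans (y := (a * n2) * d1^-1)).
    by apply: ler_wpM2r => //; rewrite invr_ge0.
  by apply: ler_wpM2l => //; rewrite mulr_ge0 // ltW.
rewrite /Pr /RWS /rws_dist (rws_walk_ext _ _ _ _ _ _ acc) mulr_sumr.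
apply: ler_sum => r _; rewrite mulr_sumr big_seq [X in _ <= X]big_seq.
apply: ler_sum => pq Hpq; rewrite [X in _ <= X]mulrCA; apply: ler_wpM2l; last exact: em.
exact: rws_walk_ge0 Hpq.
Qed.
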